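(* Let $\{\alpha_k^{c}\}$ and $\{\tilde\alpha_k^{c}\}$ be the sequences of actual and tentative continuous stepsizes yielded by Algorithm DFNDFL (described in the context) along the directions $s_k\in D^c(x_k)$. Then \[ \lim_{k\to\infty}\max \{\alpha_k^{c}, \tilde \alpha_k^{c}\} = 0. \]
   Context: Consider the problem $\min f(x)$ s.t. $x\in X\cap\mathcal{Z}$, where $X=\{x\in\mathbb{R}^n: l\le x\le u\}$ is compact (with $l_i<u_i$, and $l_i,u_i\in\mathbb{Z}$ for $i\in I^z$), $\mathcal{Z}=\{x\in\mathbb{R}^n: x_i\in\mathbb{Z},\ i\in I^z\}$, $I^c\cup I^z=\{1,\dots,n\}$, $I^c\cap I^z=\emptyset$, and $f$ is continuous and Lipschitz continuous with respect to the continuous variables $x_i$, $i\in I^c$. $[x]_{[l,u]}=\max\{l,\min\{u,x\}\}$ denotes projection onto $X$. $D^c(x)$ is the cone of vectors $s$ with $s_i=0$ for $i\in I^z$, $s_i\ge0$ if $i\in I^c$ and $x_i=l_i$, $s_i\le 0$ if $i\in I^c$ and $x_i=u_i$. Projected Continuous Search$(\tilde\alpha,w,p;\alpha,\tilde p)$ with data $\gamma>0$, $\delta\in(0,1)$: set $\alpha=\tilde\alpha$; if $f([w+\alpha p]_{[l,u]})\le f(w)-\gamma\alpha^2$ set $\tilde p=p$, else if $f([w-\alpha p]_{[l,u]})\le f(w)-\gamma\alpha^2$ set $\tilde p=-p$, else return $\alpha=0$, $\tilde p=p$; in the successful case repeatedly set $\beta=\alpha/\delta$ and, while $f([w+\beta\tilde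 p]_{[l,u]})\le f(w)-\gamma\beta^2$, set $\alpha=\beta$; return $\alpha,\tilde p$. Algorithm DFNDFL: start from $x_0\in X\cap\mathcal{Z}$, $\xi_0>0$, $\theta\in(0,1)$, a sequence $\{s_k\}$ with $s_k\in D^c(x_0)$, $\|s_k\|=1$, and $\tilde\alpha_0^c=1$. At iteration $k$, Phase 1 computes $\alpha_k^c,\tilde s_k$ by the Projected Continuous Search$(\tilde\alpha_k^c,x_k,s_k)$; if $\alpha_k^c=0$ then $\tilde\alpha_{k+1}^c=\theta\tilde\alpha_k^c$ and $\tilde x_k=x_k$, otherwise $\tilde\alpha_{k+1}^c=\alpha_k^c$ and $\tilde x_k=[x_k+\alpha_k^c\tilde s_k]_{[l,u]}$. Phase 2 then explores feasible primitive integer directions (directions with zero continuous part and integer part having greatest common divisor 1) by a Discrete Search requiring sufficient decrease $f(w+\alpha p)\le f(w)-\xi_k$, producing a point $y^+\in X\cap\mathcal{Z}$ with $f(y^+)\le f(\tilde x_k)$, and updates $\xi_k$ (nonincreasingly). Phase 3 chooses any $x_{k+1}\in X\cap\mathcal{Z}$ with $f(x_{k+1})\le f(y^+)$. Hence $f(x_{k+1})\le f(\tilde x_k)\le f(x_k)$ for all $k$. *)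

(* Defs.v *)
From HB Require Import structures.
From mathcomp Require Import all_boot all_order all_algebra.
From mathcomp Require Import all_classical all_reals all_analysis.
Set Implicit Arguments. Unset Strict Implicit. Unset Printing Implicit Defensive.
Import Order.TTheory GRing.Theory Num.Theory.
Import numFieldNormedType.Exports.
Local Open Scope classical_set_scope.
Local Open Scope ring_scope.

Section DFNDFL.
Variables (R : realType) (n : nat).
Implicit Types (x y p w s : 'rV[R]_n).

Definition inX (l u : 'rV[R]_n) x : Prop := forall i, l 0 i <= x 0 i <= u 0 i.

Definition inZ (Iz : {set 'I_n}) x : Prop := forall i, i \in Iz -> x 0 i \is a Num.int.

Definition feasibleXZ (l u : 'rV[R]_n) (Iz : {set 'I_n}) x : Prop := inX l u x /\ inZ Iz x.

Definition box_proj (l u : 'rV[R]_n) x : 'rV[R]_n :=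
  \row_i Num.max (l 0 i) (Num.min (u 0 i) (x 0 i)).

Definition Dc (l u : 'rV[R]_n) (Iz : {set 'I_n}) x s : Prop :=
  forall i,
    (i \in Iz -> s 0 i = 0) /\
    (i \notin Iz -> x 0 i = l 0 i -> 0 <= s 0 i) /\
    (i \notin Iz -> x 0 i = u 0 i -> s 0 i <= 0).

Definition unit_norm2 s : Prop := \sum_i (s 0 i) ^+ 2 = 1.

(* Input/output specification of Projected Continuous Search(atil, w, p; alpha, ptil)
   with data gamma, delta: either both tentative tests fail and (alpha, ptil) = (0, p),
   or a sign ptil in {p, -p} is selected (p first) and the expansion loop,
   which tries beta = atil / delta^i for i = 1, 2, ..., stops at the first failure,
   returning alpha = atil / delta^j. *)
Definition pcs_suff_dec (f : 'rV[R]_n -> R) (gamma : R) (l u : 'rV[R]_n) w d a : bool :=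
  f (box_proj l u (w + a *: d)) <= f w - gamma * a ^+ 2.

Definition PCS (f : 'rV[R]_n -> R) (gamma delta : R) (l u : 'rV[R]_n)
  (atil : R) w p (alpha : R) (ptil : 'rV[R]_n) : Prop :=
  (~~ pcs_suff_dec f gamma l u w p atil /\ ~~ pcs_suff_dec f gamma l u w (- p) atil /\
     alpha = 0 /\ ptil = p)
  \/
  ((ptil = p /\ pcs_suff_dec f gamma l u w p atil \/
    ptil = - p /\ ~~ pcs_suff_dec f gamma l u w p atil /\ pcs_suff_dec f gamma l u w (- p) atil) /\
   exists j : nat,
     (forall i : nat, (i <= j)%N -> pcs_suff_dec f gamma l u w ptil (atil / delta ^+ i)) /\
     ~~ pcs_suff_dec f gamma l u w ptil (atil / delta ^+ j.+1) /\
     alpha = atil / delta ^+ j).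

End DFNDFL.

(* Main.v *)
Require Import Defs.
From HB Require Import structures.
From mathcomp Require Import all_boot all_order all_algebra.
From mathcomp Require Import all_classical all_reals all_analysis.
Import Order.TTheory GRing.Theory Num.Theory.
Import numFieldNormedType.Exports.
Local Open Scope classical_set_scope.
Local Open Scope ring_scope.

Lemma lowb (R : realType) (n : nat) (l u : 'rV[R]_n) (f : 'rV[R]_n -> R) y0 :
  inX l u y0 -> {within [set y | inX l u y], continuous f} ->
  exists m, forall y, inX l u y -> m <= f y.
Proof.
move=> Hy0 Hc.
have E : [set y | inX l u y] = [set v : 'rV[R]_n | forall i, `[l 0 i, u 0 i]%classic (v ord0 i)].
  by rewrite predeqE => y; split => /= H i; have := H i; rewrite /= in_itv.
have cA : compact [set y | inX l u y].
  rewrite E. have := @rV_compact R^o n (fun i => `[l 0 i, u 0 i]%classic). move=> /(_ (fun i => @segment_compact R _ _)). exact.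
have ne : [set y | inX l u y] !=set0 by exists y0.
have [c _ Hc2] := @compact_EVT_min _ R f _ ne cA Hc.
by exists (f c) => y Hy; apply: Hc2; rewrite inE.
Qed.

From mathcomp Require Import lra.

Theorem mainTheorem7 (R : realType) (n : nat) (Iz : {set 'I_n})
  (l u : 'rV[R]_n) (f : 'rV[R]_n -> R)
  (gamma delta theta : R)
  (x xt s ptil : nat -> 'rV[R]_n) (alpha atil : nat -> R) :
  (* the box X: l_i < u_i, integer bounds on integer variables *)
  (forall i, l 0 i < u 0 i) ->
  (forall i, i \in Iz -> l 0 i \is a Num.int /\ u 0 i \is a Num.int) ->
  (* f continuous on X and Lipschitz w.r.t. the continuous variables *)
  {within [set y | inX l u y], continuous f} ->
  (exists L : R, forall y z, inX l u y -> inX l u z ->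
      (forall i, i \in Iz -> y 0 i = z 0 i) -> `|f y - f z| <= L * `|y - z|) ->
  (* parameters *)
  0 < gamma -> 0 < delta < 1 -> 0 < theta < 1 ->
  (* initialization *)
  feasibleXZ l u Iz (x 0%N) -> atil 0%N = 1 ->
  (* directions *)
  (forall k, Dc l u Iz (x k) (s k) /\ unit_norm2 (s k)) ->
  (* Phase 1 *)
  (forall k, PCS f gamma delta l u (atil k) (x k) (s k) (alpha k) (ptil k)) ->
  (forall k, alpha k = 0 -> atil k.+1 = theta * atil k /\ xt k = x k) ->
  (forall k, alpha k != 0 ->
     atil k.+1 = alpha k /\ xt k = box_proj l u (x k + alpha k *: ptil k)) ->
  (* Phases 2 and 3 *)
  (forall k, feasibleXZ l u Iz (x k.+1) /\ f (x k.+1) <= f (xt k)) ->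
  (fun k => Num.max (alpha k) (atil k)) @ \oo --> (0 : R).
Proof.
move=> _ _ Hc _ g0 /andP[d0 d1] /andP[t0 t1] [X0 _] a0 _ Hpcs Hfail Hsucc Hnext.
have Xk : forall k, inX l u (x k) by case=> [|k] //; have [[]] := Hnext k.
have [m Hm] := @lowb _ _ l u f _ X0 Hc.
have aneg : forall k, 0 <= atil k.
  elim=> [|k IH]; first by rewrite a0.
  have [E|nz] := eqVneq (alpha k) 0.
    by have [-> _] := Hfail k E; rewrite mulr_ge0 // ltW.
  have [-> _] := Hsucc k nz.
  case: (Hpcs k) => [[_ [_ [-> _]]]|[_ [j [_ [_ ->]]]]] //.
  by rewrite divr_ge0 // exprn_ge0 // ltW.
have alneg : forall k, 0 <= alpha k.
  move=> k; case: (Hpcs k) => [[_ [_ [-> _]]]|[_ [j [_ [_ ->]]]]] //.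
  by rewrite divr_ge0 // exprn_ge0 // ltW.
have dec : forall k, f (x k.+1) <= f (x k) - gamma * alpha k ^+ 2.
  move=> k; have [_ Hn] := Hnext k.
  have [E|nz] := eqVneq (alpha k) 0.
    have [_ Ex] := Hfail k E; rewrite E Ex in Hn *; lra.
  have [_ Ex] := Hsucc k nz; rewrite Ex in Hn.
  case: (Hpcs k) => [[_ [_ [E _]]]|[_ [j [Hj [_ Ea]]]]]; first by rewrite E eqxx in nz.
  have := Hj j (leqnn j); rewrite /pcs_suff_dec -Ea => H; lra.
have mono : forall k j, f (x (k + j)%N) <= f (x k).
  move=> k; elim=> [|j IH]; first by rewrite addn0.
  rewrite addnS; have := dec (k + j)%N; have := alneg (k + j)%N; nra.
have asmall : forall e, 0 < e -> exists K, forall k, (K <= k)%N -> alpha k < e.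
  move=> e e0; apply: contrapT => Hn.
  have H : forall K, exists k, (K <= k)%N /\ e <= alpha k.
    move=> K; apply: contrapT => H2; apply: Hn; exists K => k Kk.
    rewrite ltNge; apply/negP => ek; apply: H2; by exists k.
  pose c := gamma * e ^+ 2.
  have c0 : 0 < c by rewrite mulr_gt0 // exprn_gt0.
  have HN : forall N : nat, exists K, f (x K) <= f (x 0%N) - N%:R * c.
    elim=> [|N [K HK]]; first by exists 0%N; rewrite mul0r subr0.
    have [k [Kk ek]] := H K; exists k.+1.
    have := dec k; have := mono K (k - K)%N; rewrite subnKC // => h1 h2.
    rewrite -natr1 mulrDl mul1r.
    have : e ^+ 2 <= alpha k ^+ 2 by rewrite !expr2; have := ltW e0; nra.
    move=> /(ler_wpM2l (ltW g0)); rewrite -/c => h3.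
    lra.
  have q0 : 0 <= (f (x 0%N) - m) / c.
    by rewrite divr_ge0 ?(ltW c0) // subr_ge0 Hm.
  have [K HK] := HN (Num.Def.archi_bound ((f (x 0%N) - m) / c)).
  have := archi_boundP q0; rewrite ltr_pdivrMr // => h.
  have := Hm _ (Xk K); lra.
apply/cvgrPdist_le => e e0.
have [K HK] := asmall e e0.
set a := atil K.
have claim : forall j, atil (K + j)%N <= e \/ atil (K + j)%N <= theta ^+ j * a.
  elim=> [|j IH]; first by right; rewrite addn0 expr0 mul1r.
  rewrite addnS.
  have [E|nz] := eqVneq (alpha (K + j)%N) 0.
    have [-> _] := Hfail _ E.
    have := aneg (K + j)%N.
    case: IH => h; [left; nra | right].
    rewrite exprS -mulrA; apply: ler_wpM2l; [exact: ltW|exact: h].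
  have [-> _] := Hsucc _ nz; left; apply: ltW; apply: HK; exact: leq_addr.
have ea0 : 0 < e / (a + 1) by rewrite divr_gt0 // ltr_wpDl // aneg.
have := cvg_expr (_ : `|theta| < 1).
move=> /(_ _); rewrite ger0_norm ?ltW //.
move=> /(_ t1) /cvgrPdist_le /(_ _ ea0) [M _ HM].
exists (K + M)%N => // k /= Hk.
have Kk : (K <= k)%N by apply: leq_trans Hk; exact: leq_addr.
have hM' : theta ^+ (k - K) <= e / (a + 1).
  have : (M <= k - K)%N by rewrite leq_subRL.
  move=> /HM /=; rewrite sub0r normrN ger0_norm // exprn_ge0 // ltW //.
have := claim (k - K)%N; rewrite subnKC // => cl.
have ha : theta ^+ (k - K) * a <= e.
  have a0' := aneg K; rewrite -/a in a0'.
  have : theta ^+ (k - K) * (a + 1) <= e by rewrite -ler_pdivlMr ?ltr_wpDl.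
  have := exprn_ge0 (k - K) (ltW t0); nra.
have hal := HK k Kk; have := alneg k; have := aneg k.
rewrite sub0r normrN ger0_norm; last by rewrite le_max alneg.
move=> ? ?; rewrite ge_max; apply/andP; split; [lra|case: cl => h; lra].
Qed.
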